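(* Let $G=(V,E)$ be a graph and let $U,U^*\subseteq V$ be dominating sets of $G$. For every vertex $v\in V\setminus(U\cup U^* )$ choose a neighbour $u_v\in U$ of $v$. Let $\tilde G$ be the graph obtained from $G$ by contracting the edges $vu_v$ for all $v\in V\setminus(U\cup U^* )$; explicitly, $V(\tilde G)=U\cup U^*$, where each $x\in U$ represents the set $B_x=\{x\}\cup\{v\in V\setminus(U\cup U^* ): u_v=x\}$ and each $x\in U^*\setminus U$ represents $B_x=\{x\}$, and two distinct vertices $x,y$ of $\tilde G$ are adjacent iff $G$ has an edge between $B_x$ and $B_y$. Let $\{S_1,\dots,S_k\}$ be any division of $\tilde G$. Then for every $i\in\{1,\dots,k\}$, the set $(U\setminus\mathrm{int}(S_i))\cup(U^*\cap S_i)$ is a dominating set of $G$.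
   Context: A dominating set of $G$ is a set $D\subseteq V$ such that every vertex of $G$ is in $D$ or has a neighbour in $D$. For a collection $\mathcal S=\{S_1,\dots,S_k\}$ of subsets of the vertex set of a graph $H$, the boundary of $S_i$ is $\partial S_i=S_i\cap\bigcup_{j\ne i}S_j$ and its interior is $\mathrm{int}(S_i)=S_i\setminus\partial S_i$. A division of $H$ is a collection $\{S_1,\dots,S_k\}$ of subsets of $V(H)$ such that (a) every vertex and every edge of $H$ belongs to some induced subgraph $H[S_i]$, and (b) for every $i$ and every $v\in\mathrm{int}(S_i)$, all neighbours of $v$ in $H$ lie in $S_i$. *)

(* Defs.v *)
From mathcomp Require Import all_boot.
Set Implicit Arguments. Unset Strict Implicit. Unset Printing Implicit Defensive.

Definition dominating (V : finType) (W : {set V}) (adj : rel V) (D : {set V}) : Prop :=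
  D \subset W /\
  forall v, v \in W -> v \in D \/ exists2 w, w \in D & adj v w.

Definition bdry (V : finType) (P : {set {set V}}) (S : {set V}) : {set V} :=
  S :&: \bigcup_(T in P | T != S) T.
Definition intr (V : finType) (P : {set {set V}}) (S : {set V}) : {set V} :=
  S :\: bdry P S.

Definition division (V : finType) (W : {set V}) (adj : rel V) (P : {set {set V}}) : Prop :=
  (forall S, S \in P -> S \subset W) /\
  (forall x, x \in W -> exists2 S, S \in P & x \in S) /\
  (forall x y, x \in W -> y \in W -> adj x y ->
     exists2 S, S \in P & (x \in S) && (y \in S)) /\
  (forall S v w, S \in P -> v \in intr P S -> w \in W -> adj v w -> w \in S).

Definition branch (V : finType) (U Us : {set V}) (u : V -> V) (x : V) : {set V} :=
  if x \in U then x |: [set v | (v \notin U :|: Us) && (u v == x)] else [set x].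

Definition contr_adj (V : finType) (e : rel V) (U Us : {set V}) (u : V -> V) : rel V :=
  fun x y => (x != y) &&
    [exists a in branch U Us u x, exists b in branch U Us u y, e a b].

(* Main.v *)
Require Import Defs.
From mathcomp Require Import all_boot.

Lemma branch_self (V : finType) (U Us : {set V}) (u : V -> V) x :
  x \in branch U Us u x.
Proof. rewrite /branch; case: ifP => _; [exact: setU11 | exact: set11]. Qed.

Theorem mainTheorem7 (V : finType) (e : rel V)
  (e_sym : symmetric e) (e_irr : irreflexive e)
  (U Us : {set V})
  (hU : dominating [set: V] e U) (hUs : dominating [set: V] e Us)
  (u : V -> V)
  (hu : forall v, v \notin U :|: Us -> (u v \in U) && e v (u v))
  (P : {set {set V}})
  (hP : division (U :|: Us) (contr_adj e U Us u) P) :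
  forall S, S \in P ->
    dominating [set: V] e ((U :\: intr P S) :|: (Us :&: S)).
Proof.
move=> S SP; split; first exact: subsetT.
have [hsub [_ [_ hint]]] := hP.
have intS : forall x, x \in intr P S -> x \in S.
  by move=> x; rewrite /intr inE => /andP[].
have key : forall x y a b, x \in intr P S -> y \in U :|: Us ->
    a \in branch U Us u x -> b \in branch U Us u y -> e a b -> y \in S.
  move=> x y a b xi yW ha hb eab.
  have [<-|nxy] := eqVneq x y; first exact: intS.
  have xW : x \in U :|: Us.
    have xs := intS _ xi.
    exact: (subsetP (hsub _ SP)).
  apply: (hint S x y SP xi yW).
  rewrite /contr_adj nxy /=; apply/existsP; exists a; rewrite ha /=.
  by apply/existsP; exists b; rewrite hb.
have inD1 : forall w, w \in U -> w \notin intr P S ->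
    w \in (U :\: intr P S) :|: (Us :&: S).
  by move=> w wU wi; rewrite inE; apply/orP; left; rewrite inE wi wU.
have inD2 : forall w, w \in Us -> w \in S ->
    w \in (U :\: intr P S) :|: (Us :&: S).
  by move=> w h1 h2; rewrite !inE h1 h2 orbT.
move=> v _.
case vU: (v \in U).
  case vi: (v \in intr P S); last by left; apply: inD1; rewrite ?vi.
  case: (proj2 hUs v (in_setT v)) => [vUs|[w wUs evw]].
    by left; apply: inD2 => //; exact: intS.
  right; exists w => //; apply: inD2 => //.
  apply: (key v w v w) => //; rewrite ?inE ?wUs ?orbT //; exact: branch_self.
case vUs: (v \in Us).
  case: (proj2 hU v (in_setT v)) => [|[w wU evw]]; first by rewrite vU.
  case wi: (w \in intr P S); last by right; exists w => //; apply: inD1; rewrite ?wi.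
  left; apply: inD2 => //.
  apply: (key w v w v) => //; rewrite ?inE ?vUs ?orbT //; try exact: branch_self.
  by rewrite e_sym.
have vn : v \notin U :|: Us by rewrite inE vU vUs.
have /andP[xU evx] := hu v vn.
case xi: (u v \in intr P S); last by right; exists (u v) => //; apply: inD1; rewrite ?xi.
case: (proj2 hUs v (in_setT v)) => [|[y yUs evy]]; first by rewrite vUs.
right; exists y => //; apply: inD2 => //.
apply: (key (u v) y v y) => //; rewrite ?inE ?yUs ?orbT //; last exact: branch_self.
rewrite /branch xU; apply/setU1P; right; by rewrite inE vn eqxx.
Qed.
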